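(* Let $0<q<1$, $I=[0,b)$ with $0<b\le\infty$, and let $u_0:I\to\mathbb{R}$ be continuous with $1+(1-q)yu_0(y)>0$ and $1-(1-q)yu_0(qy)>0$ for all $y\in I$. Put $V_0(x)=\partial_qu_0(x)+u_0(x)u_0(qx)$ and, for $t\in\mathbb{R}$, $$w_t(x)=\frac{t\exp\Big(\frac{1}{1-q}\int_0^x\frac1y\ln\frac{1+(1-q)yu_0(y)}{1-(1-q)yu_0(qy)}d_qy\Big)}{1+t\int_0^x\frac{1}{1+(1-q)yu_0(y)}\exp\Big(\frac{1}{1-q}\int_0^y\frac1s\ln\frac{1+(1-q)su_0(s)}{1-(1-q)su_0(qs)}d_qs\Big)d_qy},\qquad u(t,x)=u_0(x)-w_t(x),$$ assuming the denominator does not vanish on $I$. Then, for $x\in I\setminus\{0\}$, $$-\partial_qu(t,x)+u(t,x)u(t,qx)=-\partial_qu_0(x)+u_0(x)u_0(qx),$$ and $$\partial_qu(t,x)+u(t,x)u(t,qx)=V_0(x)-2\,\partial_qw_t(x).$$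
   Context: $\partial_q f(x)=\dfrac{f(x)-f(qx)}{(1-q)x}$ for $x\neq0$ (applied in the variable $x$); $\int_0^x f(t)\,d_qt=\sum_{n\ge0}(1-q)q^nx\,f(q^nx)$ (Jackson $q$-integral). *)

(* Defs.v *)
From Stdlib Require Import Reals Lra.
From Coquelicot Require Import Coquelicot.
Open Scope R_scope.

Definition qderiv (q : R) (f : R -> R) (x : R) : R :=
  (f x - f (q * x)) / ((1 - q) * x).

Definition qint (q : R) (f : R -> R) (x : R) : R :=
  Series (fun n : nat => (1 - q) * q ^ n * x * f (q ^ n * x)).

Definition in_I (b : Rbar) (y : R) : Prop := 0 <= y /\ Rbar_lt (Finite y) b.

Definition continuous_on_I (b : Rbar) (f : R -> R) : Prop :=
  forall y, in_I b y -> forall eps, 0 < eps ->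
    exists delta, 0 < delta /\
      forall z, in_I b z -> Rabs (z - y) < delta -> Rabs (f z - f y) < eps.

Definition Eexp (q : R) (u0 : R -> R) (x : R) : R :=
  exp (/ (1 - q) *
       qint q (fun y => / y * ln ((1 + (1 - q) * y * u0 y) /
                                  (1 - (1 - q) * y * u0 (q * y)))) x).

Definition Den (q : R) (u0 : R -> R) (t x : R) : R :=
  1 + t * qint q (fun y => / (1 + (1 - q) * y * u0 y) * Eexp q u0 y) x.

Definition w (q : R) (u0 : R -> R) (t x : R) : R :=
  t * Eexp q u0 x / Den q u0 t x.

Definition u (q : R) (u0 : R -> R) (t x : R) : R := u0 x - w q u0 t x.

Definition V0 (q : R) (u0 : R -> R) (x : R) : R :=
  qderiv q u0 x + u0 x * u0 (q * x).

(* Main.v *)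
Require Import Defs.
From Stdlib Require Import Reals Lra Lia.
From Coquelicot Require Import Coquelicot.
Open Scope R_scope.

Lemma powq_le1 (q : R) (k : nat) : 0 <= q <= 1 -> 0 <= q ^ k <= 1.
Proof. intros H; induction k; simpl; nra. Qed.

Lemma exp_mono x y : x <= y -> exp x <= exp y.
Proof. intros [H|H]. apply Rlt_le, exp_increasing; auto. subst; lra. Qed.

Lemma ln_bound a : 1/2 <= a -> Rabs (ln a) <= 2 * Rabs (a - 1).
Proof.
  intros Ha.
  assert (H1 : ln a <= a - 1).
  { pose proof (exp_ineq1_le (ln a)). rewrite exp_ln in H; lra. }
  assert (H2 : ln (/ a) <= / a - 1).
  { pose proof (exp_ineq1_le (ln (/a))). rewrite exp_ln in H. lra.
    apply Rinv_0_lt_compat; lra. }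
  rewrite ln_Rinv in H2 by lra.
  assert (H3 : / a - 1 = (1 - a) / a) by (field; lra).
  assert (H4 : Rabs ((1 - a)/a) <= 2 * Rabs (a - 1)).
  { unfold Rdiv. rewrite Rabs_mult, Rabs_inv, (Rabs_pos_eq a) by lra.
    rewrite <- Rabs_Ropp. replace (- (1 - a)) with (a - 1) by ring.
    assert (0 < / a <= 2). { split. apply Rinv_0_lt_compat; lra.
      rewrite <- (Rinv_inv 2). apply Rinv_le_contravar; lra. }
    pose proof (Rabs_pos (a-1)). nra. }
  pose proof (Rle_abs ((1-a)/a)).
  apply Rabs_le; split.
  - lra.
  - pose proof (Rle_abs (a - 1)). lra.
Qed.

Lemma geom_ex (q x B : R) (F : R -> R) (N : nat) : 0 < q < 1 ->
  (forall n, (N <= n)%nat -> Rabs (F (q ^ n * x)) <= B) ->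
  ex_series (fun n => (1 - q) * q ^ n * x * F (q ^ n * x)).
Proof.
  intros Hq HB.
  apply (ex_series_incr_n _ N).
  apply (@ex_series_le R_AbsRing R_CompleteNormedModule _ (fun n => ((1 - q) * q ^ N * Rabs x * B) * q ^ n)).
  - intros n. change norm with Rabs. simpl.
    rewrite !Rabs_mult. rewrite pow_add.
    rewrite (Rabs_pos_eq (1-q)) by lra.
    rewrite (Rabs_pos_eq (q ^ N * q ^ n)).
    2:{ apply Rmult_le_pos; apply pow_le; lra. }
    specialize (HB (N + n)%nat ltac:(lia)). rewrite pow_add in HB.
    pose proof (pow_le q N ltac:(lra)). pose proof (pow_le q n ltac:(lra)).
    pose proof (Rabs_pos x). pose proof (Rabs_pos (F (q ^ N * q ^ n * x))).
    assert (0 <= (1 - q) * (q ^ N * q ^ n) * Rabs x) by (repeat apply Rmult_le_pos; lra).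
    nra.
  - apply (ex_series_scal_l ((1 - q) * q ^ N * Rabs x * B) (fun n => q ^ n)).
    eexists. apply is_series_geom. rewrite Rabs_pos_eq; lra.
Qed.

Lemma qint_shift (q x : R) (F : R -> R) :
  ex_series (fun n => (1 - q) * q ^ n * x * F (q ^ n * x)) ->
  Series (fun n => (1 - q) * q ^ n * x * F (q ^ n * x)) =
  (1 - q) * x * F x + Series (fun n => (1 - q) * q ^ n * (q * x) * F (q ^ n * (q * x))).
Proof.
  intros He. rewrite Series_incr_1 by auto. simpl.
  f_equal. f_equal; ring_simplify; auto. f_equal; ring.
  apply Series_ext; intros n. simpl.
  replace (q * q ^ n * x) with (q ^ n * (q * x)) by ring. ring.
Qed.

Lemma qint_bound (q y B : R) (F : R -> R) : 0 < q < 1 -> 0 <= y ->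
  (forall k, Rabs (F (q ^ k * y)) <= B) ->
  Rabs (Series (fun n => (1 - q) * q ^ n * y * F (q ^ n * y))) <= y * B.
Proof.
  intros Hq Hy HB.
  assert (HB0 : 0 <= B) by (specialize (HB O); pose proof (Rabs_pos (F (q^0*y))); lra).
  assert (Hle : forall n, Rabs ((1 - q) * q ^ n * y * F (q ^ n * y)) <= ((1-q) * y * B) * q ^ n).
  { intros n. rewrite !Rabs_mult. rewrite (Rabs_pos_eq (1-q)) by lra.
    rewrite (Rabs_pos_eq y) by lra. rewrite (Rabs_pos_eq (q^n)) by (apply pow_le; lra).
    specialize (HB n). pose proof (pow_le q n ltac:(lra)).
    assert (0 <= (1-q) * q^n * y) by (repeat apply Rmult_le_pos; lra). nra. }
  assert (Hg : is_series (fun n => ((1-q) * y * B) * q ^ n) (y * B)).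
  { replace (y * B) with (((1-q)*y*B) * / (1 - q)) by (field; lra).
    apply (is_series_scal_l ((1 - q) * y * B) (fun n => q ^ n)).
    apply is_series_geom. rewrite Rabs_pos_eq; lra. }
  assert (Hea : ex_series (fun n => Rabs ((1 - q) * q ^ n * y * F (q ^ n * y)))).
  { apply (@ex_series_le R_AbsRing R_CompleteNormedModule _ _ (fun n => Rle_trans _ _ _ (Req_le _ _ (Rabs_Rabsolu _)) (Hle n))).
    eexists; eauto. }
  eapply Rle_trans. apply Series_Rabs; auto.
  rewrite <- (is_series_unique _ _ Hg).
  apply Series_le. intros n; split; [apply Rabs_pos| apply Hle].
  eexists; eauto.
Qed.

Theorem mainTheorem8 (q : R) (b : Rbar) (u0 : R -> R) (t : R) :
  0 < q < 1 ->
  Rbar_lt (Finite 0) b ->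
  continuous_on_I b u0 ->
  (forall y, in_I b y -> 1 + (1 - q) * y * u0 y > 0) ->
  (forall y, in_I b y -> 1 - (1 - q) * y * u0 (q * y) > 0) ->
  (forall x, in_I b x -> Den q u0 t x <> 0) ->
  forall x, in_I b x -> x <> 0 ->
    - qderiv q (u q u0 t) x + u q u0 t x * u q u0 t (q * x)
      = - qderiv q u0 x + u0 x * u0 (q * x)
    /\
    qderiv q (u q u0 t) x + u q u0 t x * u q u0 t (q * x)
      = V0 q u0 x - 2 * qderiv q (w q u0 t) x.
Proof.
  intros Hq Hb Hc Ha Hcc HD x Hx Hx0.
  assert (Hxp : 0 < x) by (destruct Hx; lra).
  assert (HI0 : in_I b 0) by (split; [lra|auto]).
  assert (HIy : forall y, 0 <= y <= x -> in_I b y).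
  { intros y Hy. split. lra. destruct Hx as [_ Hx]. destruct b; simpl in *; auto; lra. }
  destruct (Hc 0 HI0 1 ltac:(lra)) as [delta [Hdel Hdc]].
  set (M := Rabs (u0 0) + 1).
  assert (HM : 0 < M) by (pose proof (Rabs_pos (u0 0)); unfold M; lra).
  set (y0 := Rmin x (Rmin (delta / 2) (/ (4 * (1 - q) * M)))).
  assert (Hy0p : 0 < y0).
  { unfold y0. repeat apply Rmin_glb_lt; try lra. apply Rinv_0_lt_compat.
    assert (0 < 1 - q) by lra. nra. }
  assert (Hy0x : y0 <= x) by apply Rmin_l.
  assert (Hy0d : y0 < delta).
  { unfold y0. eapply Rle_lt_trans. apply Rmin_r. eapply Rle_lt_trans. apply Rmin_l. lra. }
  assert (Hy0M : (1 - q) * y0 * M <= 1/4).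
  { assert (y0 <= / (4 * (1 - q) * M)) by (unfold y0; eapply Rle_trans; [apply Rmin_r| apply Rmin_r]).
    assert (0 < 1 - q) by lra.
    apply Rmult_le_compat_l with (r := 4 * (1-q) * M) in H.
    rewrite Rinv_r in H. nra. assert (0 < 4 * (1-q) * M) by nra. lra.
    assert (0 < 4 * (1-q) * M) by nra. lra. }
  set (g := fun y => / y * ln ((1 + (1 - q) * y * u0 y) / (1 - (1 - q) * y * u0 (q * y)))).
  assert (Hu0b : forall y, 0 <= y <= y0 -> Rabs (u0 y) <= M).
  { intros y Hy. assert (Rabs (u0 y - u0 0) < 1).
    { apply Hdc. apply HIy; lra. rewrite Rminus_0_r, Rabs_pos_eq; lra. }
    pose proof (Rabs_triang_inv (u0 y) (u0 0)). unfold M; lra. }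
  assert (Hgb : forall y, 0 <= y <= y0 -> Rabs (g y) <= 4 * (1 - q) * M).
  { intros y Hy. destruct (Req_dec y 0) as [->|Hy0].
    - unfold g. rewrite Rinv_0, Rmult_0_l, Rabs_R0. assert (0 < 1 - q) by lra. nra.
    - assert (Hqy : 0 <= q * y <= y0) by nra.
      pose proof (Hu0b y Hy) as B1. pose proof (Hu0b (q*y) Hqy) as B2.
      assert (0 < 1 - q) by lra.
      assert (E1 : Rabs ((1 - q) * y * u0 y) <= (1-q) * y * M).
      { rewrite !Rabs_mult, Rabs_pos_eq by lra. rewrite (Rabs_pos_eq y) by lra.
        apply Rmult_le_compat_l; nra. }
      assert (E2 : Rabs ((1 - q) * y * u0 (q*y)) <= (1-q) * y * M).
      { rewrite !Rabs_mult, Rabs_pos_eq by lra. rewrite (Rabs_pos_eq y) by lra.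
        apply Rmult_le_compat_l; nra. }
      assert ((1 - q) * y * M <= 1/4) by nra.
      pose proof (Rle_abs ((1 - q) * y * u0 y)). pose proof (Rle_abs (- ((1 - q) * y * u0 y))).
      pose proof (Rle_abs ((1 - q) * y * u0 (q*y))). pose proof (Rle_abs (- ((1 - q) * y * u0 (q*y)))).
      rewrite Rabs_Ropp in *.
      unfold g. rewrite ln_div by lra.
      pose proof (ln_bound (1 + (1 - q) * y * u0 y) ltac:(lra)).
      pose proof (ln_bound (1 - (1 - q) * y * u0 (q * y)) ltac:(lra)).
      replace (1 + (1 - q) * y * u0 y - 1) with ((1 - q) * y * u0 y) in * by ring.
      replace (1 - (1 - q) * y * u0 (q * y) - 1) with (- ((1 - q) * y * u0 (q * y))) in * by ring.
      rewrite Rabs_Ropp in *.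
      rewrite Rabs_mult, Rabs_inv, Rabs_pos_eq by lra.
      assert (Hyp : 0 < y) by lra.
      pose proof (Rabs_triang (ln (1 + (1 - q) * y * u0 y)) (- ln (1 - (1 - q) * y * u0 (q * y)))).
      rewrite Rabs_Ropp in *.
      apply (Rmult_le_reg_l y); auto. rewrite <- Rmult_assoc, Rinv_r, Rmult_1_l by lra.
      unfold Rminus at 1. nra. }
  destruct (pow_lt_1_zero q ltac:(rewrite Rabs_pos_eq; lra) (y0 / x) ltac:(apply Rdiv_lt_0_compat; lra)) as [N HN].
  assert (HNs : forall n k, (N <= n)%nat -> 0 <= q ^ k * (q ^ n * x) <= y0).
  { intros n k Hn. specialize (HN n Hn). rewrite Rabs_pos_eq in HN by (apply pow_le; lra).
    pose proof (powq_le1 q k ltac:(lra)). pose proof (pow_le q n ltac:(lra)).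
    assert (q ^ n * x < y0).
    { apply (Rmult_lt_compat_r x) in HN; auto. unfold Rdiv in HN.
      rewrite Rmult_assoc, Rinv_l, Rmult_1_r in HN; lra. }
    assert (0 <= q ^ n * x) by nra.
    split. nra. apply Rle_trans with (1 * (q ^ n * x)). apply Rmult_le_compat_r; lra. lra. }
  assert (Hexg : ex_series (fun n => (1 - q) * q ^ n * x * g (q ^ n * x))).
  { apply (geom_ex q x (4 * (1 - q) * M) g N Hq). intros n Hn.
    apply Hgb. pose proof (HNs n O Hn). simpl in H. lra. }
  set (F2 := fun y => / (1 + (1 - q) * y * u0 y) * Eexp q u0 y).
  assert (Hex2 : ex_series (fun n => (1 - q) * q ^ n * x * F2 (q ^ n * x))).
  { apply (geom_ex q x (2 * exp (4 * x * M)) F2 N Hq). intros n Hn.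
    set (y := q ^ n * x).
    assert (Hy : 0 <= y <= y0) by (pose proof (HNs n O Hn); simpl in H; unfold y; lra).
    assert (Hqi : Rabs (qint q g y) <= y * (4 * (1 - q) * M)).
    { apply qint_bound; auto. lra. intros k. apply Hgb. apply HNs; auto. }
    assert (HE : Eexp q u0 y <= exp (4 * x * M)).
    { unfold Eexp. apply exp_mono. pose proof (Rle_abs (qint q g y)).
      fold g. assert (0 < / (1 - q)) by (apply Rinv_0_lt_compat; lra).
      assert (/ (1 - q) * qint q g y <= / (1 - q) * (y * (4 * (1 - q) * M))) by nra.
      replace (/ (1 - q) * (y * (4 * (1 - q) * M))) with (4 * y * M) in H1 by (field; lra).
      nra. }
    assert (HEp : 0 < Eexp q u0 y) by apply exp_pos.
    pose proof (Hu0b y Hy).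
    assert (Ha2 : 1/2 <= 1 + (1 - q) * y * u0 y).
    { pose proof (Rle_abs (- u0 y)). rewrite Rabs_Ropp in H0. assert (0 < 1 - q) by lra.
      assert ((1 - q) * y * M <= (1 - q) * y0 * M).
      { apply Rmult_le_compat_r. lra. apply Rmult_le_compat_l; lra. }
      assert ((1-q)*y*(-u0 y) <= (1-q)*y*M).
      { apply Rmult_le_compat_l. apply Rmult_le_pos; lra. lra. }
      lra. }
    unfold F2. rewrite Rabs_mult, Rabs_inv, !Rabs_pos_eq by lra.
    assert (0 < / (1 + (1 - q) * y * u0 y) <= 2).
    { split. apply Rinv_0_lt_compat; lra. rewrite <- (Rinv_inv 2). apply Rinv_le_contravar; lra. }
    nra. }
  pose proof (qint_shift q x g Hexg) as Q1. fold (qint q g x) (qint q g (q * x)) in Q1.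
  pose proof (qint_shift q x F2 Hex2) as Q2. fold (qint q F2 x) (qint q F2 (q * x)) in Q2.
  assert (HIqx : in_I b (q * x)) by (apply HIy; nra).
  pose proof (Ha x Hx) as Hax. pose proof (Hcc x Hx) as Hcx.
  pose proof (HD x Hx) as HD0. pose proof (HD (q*x) HIqx) as HD1.
  assert (HEE : Eexp q u0 x = (1 + (1 - q) * x * u0 x) / (1 - (1 - q) * x * u0 (q * x)) * Eexp q u0 (q * x)).
  { unfold Eexp at 1. fold g. rewrite Q1.
    replace (/ (1 - q) * ((1 - q) * x * g x + qint q g (q * x))) with
      (ln ((1 + (1 - q) * x * u0 x) / (1 - (1 - q) * x * u0 (q * x))) + / (1 - q) * qint q g (q * x)).
    2:{ unfold g. field. lra. }
    rewrite exp_plus, exp_ln. reflexivity. apply Rdiv_lt_0_compat; lra. }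
  assert (HDD : Den q u0 t x = Den q u0 t (q * x) + t * (1 - q) * x * / (1 + (1 - q) * x * u0 x) * Eexp q u0 x).
  { unfold Den at 1. fold F2. rewrite Q2. unfold Den, F2. ring. }
  unfold V0, qderiv, u, w.
  revert HD0 HD1 HEE HDD Hax Hcx.
  generalize (Den q u0 t x) (Den q u0 t (q * x)) (Eexp q u0 x) (Eexp q u0 (q * x)) (u0 x) (u0 (q * x)).
  intros D0 D1 E0 E1 U0 U1 HD0 HD1 HEE HDD Hax Hcx. subst D0 E0.
  assert (0 < 1 - q) by lra.
  assert (HD0' : D1 * (1 - (1 - q) * x * U1) + t * (1 - q) * x * E1 <> 0).
  { intro Hz; apply HD0.
    replace (D1 + t * (1 - q) * x * / (1 + (1 - q) * x * U0) *
      ((1 + (1 - q) * x * U0) / (1 - (1 - q) * x * U1) * E1)) with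
      ((D1 * (1 - (1 - q) * x * U1) + t * (1 - q) * x * E1) / (1 - (1 - q) * x * U1)) by (field; lra).
    rewrite Hz. unfold Rdiv; ring. }
  split; field; repeat split; try lra; try nra; auto.
Qed.
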